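(* Let $F:\mathbb{R}^n\to\mathbb{R}$ be $C^2$, let $\mathbf{e}_i$ be one of the standard coordinate unit vectors, and let $L$ be a line parallel to $\mathbf{e}_i$. Suppose $\mathbf{x}^*\in L$ is a local maximum of $F$ in the $\mathbf{e}_i$ direction (i.e. there is $\varepsilon_1>0$ with $F(\mathbf{x}^*+c\,\mathbf{e}_i)<F(\mathbf{x}^* )$ for all $0<|c|<\varepsilon_1$) and that $\frac{\partial^2 F}{\partial \mathbf{e}_i^2}(\mathbf{x}^* )<0$. Then there exists $\epsilon>0$ such that for every orthogonal grid of spacing $dx<\epsilon$ having $L$ as one of its grid lines, there is a grid ridge point $\mathbf{x}^g$ of $F$ with $\|\mathbf{x}^*-\mathbf{x}^g\|\le dx$.
   Context: An orthogonal grid of spacing $dx$ in $\mathbb{R}^n$ is a set of points $\mathbf{p}+dx\,\mathbb{Z}^n$ with coordinate directions $\mathbf{e}_1,\dots,\mathbf{e}_n$; its grid lines are the lines through grid points parallel to some $\mathbf{e}_k$. A grid point $\mathbf{x}_0$ is a grid ridge point of $F$ if $F(\mathbf{x}_0)\ge F(\mathbf{x}_0\pm dx\,\mathbf{e}_k)$ (both signs) for at least one $k\in\{1,\dots,n\}$. *)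

(* Defs.v *)
From HB Require Import structures.
From mathcomp Require Import all_boot all_order all_algebra.
From mathcomp Require Import all_classical all_reals all_analysis.
Set Implicit Arguments. Unset Strict Implicit. Unset Printing Implicit Defensive.
Import Order.TTheory GRing.Theory Num.Theory.
Import numFieldNormedType.Exports.
Local Open Scope ring_scope.

Definition coord_vec (R : realType) (n : nat) (k : 'I_n) : 'rV[R]_n :=
  \row_(j < n) (k == j)%:R.

Definition enorm (R : realType) (n : nat) (x : 'rV[R]_n) : R :=
  Num.sqrt (\sum_(j < n) x ord0 j ^+ 2).

Definition C2 (R : realType) (n : nat) (F : 'rV[R]_n -> R) : Prop :=
  (forall (j : 'I_n) (x : 'rV[R]_n), derivable F x (coord_vec R j)) /\
  (forall (j k : 'I_n) (x : 'rV[R]_n),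
      derivable ('D_(coord_vec R j) F) x (coord_vec R k)) /\
  (forall (j k : 'I_n),
      continuous ('D_(coord_vec R k) ('D_(coord_vec R j) F))).

Definition on_grid (R : realType) (n : nat) (dx : R) (p x : 'rV[R]_n) : Prop :=
  forall k : 'I_n, exists z : int, x ord0 k = p ord0 k + z%:~R * dx.

Definition on_line (R : realType) (n : nat) (q : 'rV[R]_n) (i : 'I_n)
  (y : 'rV[R]_n) : Prop :=
  exists t : R, y = q + t *: coord_vec R i.

Definition is_grid_line (R : realType) (n : nat) (dx : R) (p : 'rV[R]_n)
  (q : 'rV[R]_n) (i : 'I_n) : Prop :=
  exists (g : 'rV[R]_n) (k : 'I_n), on_grid dx p g /\
    (forall y, on_line q i y <-> on_line g k y).

Definition grid_ridge (R : realType) (n : nat) (F : 'rV[R]_n -> R) (dx : R)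
  (x0 : 'rV[R]_n) : Prop :=
  exists k : 'I_n,
    F (x0 + dx *: coord_vec R k) <= F x0 /\ F (x0 - dx *: coord_vec R k) <= F x0.

(* Main.v *)
Require Import Defs.
From HB Require Import structures.
From mathcomp Require Import all_boot all_order all_algebra.
From mathcomp Require Import all_classical all_reals all_analysis.
From mathcomp Require Import ring lra.
Import Order.TTheory GRing.Theory Num.Theory.
Import numFieldNormedType.Exports.
Local Open Scope ring_scope.

Section S.
Variables (R : realType) (n : nat).

Lemma line_fun (f : 'rV[R]_n -> R) (x v : 'rV[R]_n) (c : R) :
  (fun h : R => h^-1 *: (((fun t : R => f (x + t *: v)) \o shift c) (h *: 1) - f (x + c *: v)))
  = (fun h : R => h^-1 *: ((f \o shift (x + c *: v)) (h *: v) - f (x + c *: v))).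
Proof.
apply: funext => h /=; congr (_ *: (_ - _)); congr f.
by rewrite [h *: 1]mulr1 scalerDl addrCA addrA.
Qed.

Lemma line_derivable (f : 'rV[R]_n -> R) (x v : 'rV[R]_n) (c : R) :
  derivable f (x + c *: v) v -> derivable (fun t : R => f (x + t *: v)) c 1.
Proof. by rewrite /derivable line_fun. Qed.

Lemma line_derive (f : 'rV[R]_n -> R) (x v : 'rV[R]_n) (c : R) :
  'D_1 (fun t : R => f (x + t *: v)) c = 'D_v f (x + c *: v).
Proof. by rewrite /derive line_fun. Qed.

Lemma near_ex (H : R -> R) : {for 0, continuous H} -> H 0 < 0 ->
  exists2 d : R, 0 < d & forall c, `|c| < d -> H c < 0.
Proof.
move=> cH H0.
have : \forall t \near 0, H t < 0 by apply: cvgr_lt cH _ H0.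
move=> /nbhs_ballP [d d0 hd]; exists d => // c cd; apply: hd.
by rewrite /ball /= sub0r normrN.
Qed.

Lemma aff_cont (x v : 'rV[R]_n) (c : R) : {for c, continuous (fun t : R => x + t *: v)}.
Proof.
exact: (continuousD (@cst_continuous _ _ x c) (@scalel_continuous _ _ v c)).
Qed.

Lemma enorm_line (i : 'I_n) (c : R) : enorm (c *: coord_vec R i) = `|c|.
Proof.
rewrite /enorm (bigD1 i) //= big1 ?addr0.
  by rewrite !mxE eqxx mulr1 sqrtr_sqr.
by move=> j ji; rewrite !mxE eq_sym (negbTE ji) mulr0 expr2 mulr0.
Qed.

Lemma grid_shift (dx : R) (p g : 'rV[R]_n) (i : 'I_n) (z : int) :
  on_grid dx p g -> on_grid dx p (g + (z%:~R * dx) *: coord_vec R i).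
Proof.
move=> Hg k; have [w Hw] := Hg k.
exists (w + (z * (i == k)%:R)%R); rewrite !mxE Hw -addrA; congr (_ + _).
rewrite intrD mulrDl; congr (_ + _).
by rewrite intrM; case: (i == k); rewrite ?mulr1 ?mulr0 ?mul0r.
Qed.

End S.

Theorem theorem1 (R : realType) (n : nat) (F : 'rV[R]_n -> R) (i : 'I_n)
  (q xs : 'rV[R]_n) :
  C2 F ->
  on_line q i xs ->
  (exists2 eps1 : R, 0 < eps1 &
     forall c : R, 0 < `|c| < eps1 -> F (xs + c *: coord_vec R i) < F xs) ->
  'D_(coord_vec R i) ('D_(coord_vec R i) F) xs < 0 ->
  exists2 eps : R, 0 < eps &
    forall (dx : R) (p : 'rV[R]_n), 0 < dx -> dx < eps ->
      is_grid_line dx p q i ->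
      exists xg : 'rV[R]_n,
        [/\ on_grid dx p xg, grid_ridge F dx xg & enorm (xs - xg) <= dx].
Proof.
move=> [dF [ddF cdF]] [t0 Hxs] [eps1 eps1_gt0 Hmax] D2neg.
set e := coord_vec R i.
pose g := fun c : R => F (xs + c *: e).
pose G := fun c : R => 'D_e F (xs + c *: e).
pose H := fun c : R => 'D_e ('D_e F) (xs + c *: e).
have dg c : derivable g c 1 by apply: line_derivable; apply: dF.
have g1 c : derive1 g c = G c by rewrite derive1E line_derive.
have dG c : derivable G c 1 by apply: (@line_derivable _ _ ('D_e F)); exact: ddF.
have G1 c : derive1 G c = H c by rewrite derive1E (@line_derive _ _ ('D_e F)).
have cH : {for 0, continuous H}.
  exact: (continuous_comp (@aff_cont _ _ xs e 0) (cdF i i _)).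
have H0 : H 0 < 0 by rewrite /H scale0r addr0.
have [d d0 Hd] := @near_ex _ _ cH H0.
pose r := d / 2.
have r0 : 0 < r by rewrite /r; lra.
have rd : r < d by rewrite /r; lra.
have Gdec : {in `[-r, r]%R &, {homo G : x y /~ x <= y}}.
  apply: ler0_derive1_le_cc.
  - by move=> x _; exact: dG.
  - move=> x; rewrite in_itv /= => /andP[h1 h2]; rewrite G1; apply/ltW/Hd.
    by rewrite ltr_norml; apply/andP; split; lra.
  - by apply: derivable_within_continuous => x _; exact: dG.
have G00 : G 0 = 0.
  have h := @derive1_at_max R g (- eps1) eps1 0.
  have hA : - eps1 <= eps1 by lra.
  have hB : forall x, x \in `]- eps1, eps1[%R -> derivable g x 1.
    by move=> x _; exact: dg.
  have hC : (0:R) \in `]- eps1, eps1[%R.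
    by rewrite in_itv /=; apply/andP; split; lra.
  have hD : forall x, x \in `]- eps1, eps1[%R -> g x <= g 0.
    move=> x; rewrite in_itv /= => /andP[h1 h2].
    rewrite /g scale0r addr0; have [->|x0] := eqVneq x 0.
      by rewrite scale0r addr0.
    apply/ltW/Hmax; rewrite normr_gt0 x0 /= ltr_norml; apply/andP; split; lra.
  have h' := h hA hB hC hD.
  by rewrite -g1 derive1E; case: h'.
have gdec : {in `[0, r]%R &, {homo g : x y /~ x <= y}}.
  apply: ler0_derive1_le_cc.
  - by move=> x _; exact: dg.
  - move=> x; rewrite in_itv /= => /andP[h1 h2]; rewrite g1 -G00.
    by apply: Gdec; rewrite ?in_itv /=; try (apply/andP; split); lra.
  - by apply: derivable_within_continuous => x _; exact: dg.
have ginc : {in `[-r, 0]%R &, {homo g : x y / x <= y}}.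
  apply: ger0_derive1_le_cc.
  - by move=> x _; exact: dg.
  - move=> x; rewrite in_itv /= => /andP[h1 h2]; rewrite g1 -G00.
    by apply: Gdec; rewrite ?in_itv /=; try (apply/andP; split); lra.
  - by apply: derivable_within_continuous => x _; exact: dg.
exists (r / 2); first lra.
move=> dx p dx0 dxr [g0 [k [Hg Hiff]]].
have : on_line q i g0 by apply/Hiff; exists 0; rewrite scale0r addr0.
case=> s0 Hg0.
pose T := t0 - s0.
have xsE : xs = g0 + T *: e.
  by rewrite Hxs Hg0 -addrA -scalerDl /T [s0 + _]addrC subrK.
pose m := Num.floor (T / dx).
pose c0 := m%:~R * dx - T.
pose c1 := c0 + dx.
have hm1 : m%:~R * dx <= T.
  by rewrite -ler_pdivlMr // floor_le.
have hm2 : T < (m + 1)%:~R * dx.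
  by rewrite -ltr_pdivrMr // floorD1_gt.
have c0le : c0 <= 0 by rewrite /c0; lra.
have c0gt : - dx < c0 by move: hm2; rewrite intrD mulrDl mul1r /c0 => ?; lra.
have gridpt (z : int) : xs + (z%:~R * dx - T) *: e = g0 + (z%:~R * dx) *: e.
  by rewrite xsE -addrA -scalerDl; congr (_ + _ *: _); lra.
have ridge c : g (c + dx) <= g c -> g (c - dx) <= g c ->
    grid_ridge F dx (xs + c *: e).
  move=> h1 h2; exists i; split.
    by rewrite -addrA -scalerDl.
  by rewrite -addrA -scalerBl.
have nrm c : enorm (xs - (xs + c *: e)) = `|c|.
  by rewrite opprD addrA subrr add0r -scaleNr enorm_line normrN.
case: (lerP (g c0) (g c1)) => hc.
- exists (xs + c1 *: e); split.
  + have -> : c1 = (m + 1)%:~R * dx - T by rewrite /c1 /c0 intrD mulrDl mul1r; lra.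
    rewrite gridpt; exact: grid_shift.
  + apply: ridge.
      by apply: gdec; rewrite ?in_itv /=; try (apply/andP; split); rewrite /c1; lra.
    by rewrite /c1 addrK.
  + by rewrite nrm ger0_norm /c1; lra.
- exists (xs + c0 *: e); split.
  + rewrite gridpt; exact: grid_shift.
  + apply: ridge; first exact: ltW.
    by apply: ginc; rewrite ?in_itv /=; try (apply/andP; split); lra.
  + by rewrite nrm ler0_norm; lra.
Qed.
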